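(* Let $n\ge1$, $\mathbf y\in\mathbb R^n$, and let $(T_1,\dots,T_m)$ be a partition of $\{1,\dots,n\}$ into sets of consecutive integers, i.e. each $T_j=\{s_j,s_j+1,\dots,t_j\}$ for some $s_j\le t_j$. Then $$k\big(\Pi_{\mathcal S_n^\uparrow}(\mathbf y)\big)\le\sum_{j=1}^m k\big(\Pi_{\mathcal S^\uparrow_{|T_j|}}(\mathbf y_{T_j})\big).$$
   Context: $\mathcal S_m^\uparrow=\{\mathbf u\in\mathbb R^m:u_1\le\dots\le u_m\}$ ($\mathcal S_1^\uparrow=\mathbb R$); $\Pi_K$ is the Euclidean projection onto $K$. For $\mathbf v\in\mathbb R^n$ and $T=\{t_1<\dots<t_{|T|}\}\subseteq\{1,\dots,n\}$, $\mathbf v_T=(v_{t_1},\dots,v_{t_{|T|}})^T\in\mathbb R^{|T|}$. $k(\mathbf u)$ is the number of distinct coordinates of $\mathbf u$. *)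

(* Defs.v *)
(* Vectors in R^m are functions 'I_m -> R (coordinates 0..m-1). *)
From HB Require Import structures.
From mathcomp Require Import all_boot all_order all_algebra.
Set Implicit Arguments. Unset Strict Implicit. Unset Printing Implicit Defensive.
Import Order.TTheory GRing.Theory Num.Theory.
Local Open Scope ring_scope.

Definition monotone (R : realFieldType) (m : nat) (u : 'I_m -> R) : Prop :=
  forall i j : 'I_m, (i <= j)%N -> u i <= u j.

Definition sqdist (R : realFieldType) (m : nat) (u v : 'I_m -> R) : R :=
  \sum_(i < m) (u i - v i) ^+ 2.

Definition is_proj_mono (R : realFieldType) (m : nat) (y x : 'I_m -> R) : Prop :=
  monotone x /\ (forall z : 'I_m -> R, monotone z -> sqdist y x <= sqdist y z).

Definition kdist (R : realFieldType) (m : nat) (u : 'I_m -> R) : nat :=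
  size (undup (codom u)).

(* v_T : the coordinates of v indexed by T, in increasing order *)
Definition subvec (R : realFieldType) (n : nat) (v : 'I_n -> R) (T : {set 'I_n})
  : 'I_#|T| -> R := fun i => v (enum_val i).

Definition consecutive (n : nat) (T : {set 'I_n}) : Prop :=
  forall a b c : 'I_n, a \in T -> b \in T -> (a <= c)%N -> (c <= b)%N -> c \in T.
Arguments subvec {R n} v T _.

(* Main.v *)
Require Import Defs.
From HB Require Import structures.
From mathcomp Require Import all_boot all_order all_algebra.
From mathcomp Require Import ring lra.
Import Order.TTheory GRing.Theory Num.Theory.
Set Implicit Arguments. Unset Strict Implicit.
Local Open Scope ring_scope.

Lemma vi (R : realFieldType) m (y x z : 'I_m -> R) :
  is_proj_mono y x -> monotone z -> \sum_i (y i - x i) * (z i - x i) <= 0.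
Proof.
move=> [mx opt] mz.
set A := \sum_i (y i - x i) * (z i - x i).
set B := \sum_i (z i - x i)^+2.
have B0 : 0 <= B by apply: sumr_ge0 => i _; exact: sqr_ge0.
have key : forall t, 0 < t -> t <= 1 -> 2 * A <= t * B.
  move=> t t0 t1.
  have mt : monotone (fun i => x i + t * (z i - x i)).
    move=> i j ij; have := mx i j ij; have := mz i j ij. nra.
  have := opt _ mt; rewrite /sqdist.
  have -> : \sum_i (y i - (x i + t * (z i - x i))) ^+ 2 =
       \sum_i (y i - x i)^+2 - t * (2 * A) + t * (t * B).
    rewrite /A /B !mulr_sumr -sumrB -big_split /=; apply: eq_bigr => i _; ring.
  move=> h.
  have h2 : t * (2 * A) <= t * (t * B) by lra.
  by rewrite ler_pM2l in h2.
rewrite leNgt; apply/negP => A0.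
have AB : 0 < A + B by lra.
set t := A / (A + B).
have t0 : 0 < t by rewrite /t divr_gt0.
have tAB : t * (A + B) = A by rewrite /t mulfVK // gt_eqF.
have t1 : t <= 1 by rewrite /t ler_pdivrMr // mul1r; lra.
have := key t t0 t1. nra.
Qed.

Lemma sorted_enum_set n (T : {set 'I_n}) :
  sorted (relpre val ltn) (enum T).
Proof.
rewrite /enum_mem; apply: sorted_filter; first by move=> a b c /= ; exact: ltn_trans.
by rewrite -enumT -sorted_map val_enum_ord; exact: iota_ltn_sorted.
Qed.

Lemma ev_lt n (T : {set 'I_n}) (i j : 'I_#|T|) :
  (i < j)%N -> (enum_val i < enum_val j)%N.
Proof.
move=> ij.
rewrite (enum_val_nth (enum_val i) i) (enum_val_nth (enum_val i) j).
have tr : transitive (relpre (val : 'I_n -> nat) ltn) by move=> a b c /=; exact: ltn_trans.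
have := @sorted_ltn_nth _ (relpre val ltn) tr (enum_val i) _ (sorted_enum_set T).
by apply; rewrite ?inE -?cardE.
Qed.

Lemma ev_le n (T : {set 'I_n}) (i j : 'I_#|T|) :
  (i <= j)%N -> (enum_val i <= enum_val j)%N.
Proof.
rewrite leq_eqVlt => /orP [/eqP/val_inj -> //|/ev_lt]; exact: ltnW.
Qed.

Lemma ev_le_inv n (T : {set 'I_n}) (i j : 'I_#|T|) :
  (enum_val i <= enum_val j)%N -> (i <= j)%N.
Proof. by move=> h; rewrite leqNgt; apply/negP => /ev_lt; rewrite ltnNge h. Qed.

Lemma ev_lt_inv n (T : {set 'I_n}) (i j : 'I_#|T|) :
  (enum_val i < enum_val j)%N -> (i < j)%N.
Proof. by move=> h; rewrite ltnNge; apply/negP => /ev_le; rewrite leqNgt h. Qed.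

Lemma reindex_T (R : realFieldType) n (T : {set 'I_n}) (x0 : 'I_n) (Hx0 : x0 \in T)
  (F : 'I_n -> R) (G : 'I_#|T| -> R) :
  \sum_k F k * (if k \in T then G (enum_rank_in Hx0 k) else 0) =
  \sum_l F (enum_val l) * G l.
Proof.
rewrite (eq_bigr (fun k => if k \in T then F k * G (enum_rank_in Hx0 k) else 0));
  last by move=> k _; case: ifP; rewrite ?mulr0.
rewrite -big_mkcond big_enum_val /=; apply: eq_bigr => l _; by rewrite enum_valK_in.
Qed.

Lemma right_side (R : realFieldType) n (y x : 'I_n -> R) (T : {set 'I_n})
  (hT : consecutive T) (hx : is_proj_mono y x) (w : 'I_#|T| -> R)
  (hw : is_proj_mono (subvec y T) w) (i j : 'I_#|T|) (hij : (j : nat) = i.+1)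
  (hlt : x (enum_val i) < x (enum_val j)) : x (enum_val j) <= w j.
Proof.
rewrite leNgt; apply/negP => hwj.
have mx := hx.1. have mw := hw.1.
have Ti := enum_valP i.
have ij : (i < j)%N by rewrite hij.
have jle : forall l : 'I_#|T|, (i < l)%N -> (j <= l)%N by move=> l; rewrite hij.
have wi : w i <= w j by apply: mw; exact: ltnW.
set X1 := x (enum_val i) in hlt *. set X2 := x (enum_val j) in hlt hwj *.
set u := w j in hwj wi *.
set t := (X2 - u) / 2.
have t0 : 0 < t by rewrite /t; lra.
set rk := enum_rank_in Ti.
have rkK : forall k, k \in T -> enum_val (rk k) = k := enum_rankK_in Ti.
pose G := fun l : 'I_#|T| => if (i < l)%N && (w l < u + t) then u + t - w l else 0.
pose g := fun k : 'I_n => if k \in T then G (rk k) else 0.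
have G0 : forall l, 0 <= G l by move=> l; rewrite /G; case: ifP => [/andP[_ h]|_]; lra.
have g0 : forall k, 0 <= g k by move=> k; rewrite /g; case: ifP.
pose eps := (X2 - X1) / t.
have eps0 : 0 < eps by rewrite divr_gt0 // subr_gt0.
have epst : eps * t = X2 - X1 by rewrite /eps divfK // gt_eqF.
have mz1 : monotone (fun l => w l + G l).
  move=> l1 l2 l12; have wl := mw l1 l2 l12; rewrite /G.
  case: ifP => [/andP[il1 h1]|/negbT h1]; case: ifP => [/andP[il2 h2]|/negbT h2].
  - lra.
  - have il2 : (i < l2)%N := leq_trans il1 l12.
    rewrite il2 /= -leNgt in h2; lra.
  - case: (ltnP i l1) => il1.
      rewrite il1 /= -leNgt in h1; lra.
    have := mw _ _ il1; lra.
  - lra.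
have mz2 : monotone (fun k => x k - eps * g k).
  move=> k1 k2 k12; have xl := mx k1 k2 k12.
  have eg1 : 0 <= eps * g k1 by apply: mulr_ge0; [lra|].
  case: (boolP (g k2 == 0)) => [/eqP ->|gk2].
    rewrite mulr0 subr0; lra.
  have [T2 i2 w2 e2] : [/\ k2 \in T, (i < rk k2)%N, w (rk k2) < u + t & g k2 = u + t - w (rk k2)].
    move: gk2; rewrite /g; case: ifP => [T2|]; last by rewrite eqxx.
    rewrite /G; case: ifP => [/andP[a b] _|]; last by rewrite eqxx.
    by split.
  have wu : u <= w (rk k2) by apply: mw; apply: jle.
  have X2le : X2 <= x k2 by rewrite -(rkK k2 T2); apply: mx; apply: ev_le; apply: jle.
  case: (leqP k1 (enum_val i)) => k1i.
    have hk1 : x k1 <= X1 := mx _ _ k1i.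
    have : eps * g k2 <= eps * t by rewrite ler_pM2l //; lra.
    lra.
  have T1 : k1 \in T by apply: (hT (enum_val i) k2) => //; exact: ltnW.
  have i1 : (i < rk k1)%N by apply: ev_lt_inv; rewrite rkK.
  have r12 : (rk k1 <= rk k2)%N by apply: ev_le_inv; rewrite !rkK.
  have w12 := mw _ _ r12.
  have e1 : g k1 = u + t - w (rk k1).
    rewrite /g T1 /G i1 /=; have -> : w (rk k1) < u + t by lra.
    by [].
  rewrite e1 e2.
  have : eps * (u + t - w (rk k2)) <= eps * (u + t - w (rk k1)) by rewrite ler_pM2l //; lra.
  lra.
have h1 := vi hw mz1.
have h2 := vi hx mz2.
have S1 : \sum_l (subvec y T l - w l) * G l <= 0.
  by rewrite (eq_bigr (fun l => (subvec y T l - w l) * (w l + G l - w l))) // => l _; ring.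
have S2 : 0 <= \sum_l (subvec y T l - x (enum_val l)) * G l.
  have E : \sum_k (y k - x k) * (x k - eps * g k - x k) = - eps * \sum_k (y k - x k) * g k.
    rewrite mulr_sumr; apply: eq_bigr => k _; ring.
  rewrite E /g (reindex_T Ti) in h2.
  rewrite /subvec; nra.
have S3 : 0 <= \sum_l (w l - x (enum_val l)) * G l.
  have -> : \sum_l (w l - x (enum_val l)) * G l =
     \sum_l (subvec y T l - x (enum_val l)) * G l - \sum_l (subvec y T l - w l) * G l.
    by rewrite -sumrB; apply: eq_bigr => l _; ring.
  lra.
have S4 : \sum_l (w l - x (enum_val l)) * G l <= \sum_l (u + t - X2) * G l.
  apply: ler_sum => l _; rewrite /G; case: ifP => [/andP[il h]|_]; last by rewrite !mulr0.
  have : X2 <= x (enum_val l) by apply: mx; apply: ev_le; apply: jle.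
  have pos : 0 <= u + t - w l by lra.
  move=> hh; apply: ler_wpM2r => //; lra.
have S5 : t <= \sum_l G l.
  rewrite (bigD1 j) //=.
  have -> : G j = t.
    rewrite /G ij /=; have -> : w j < u + t by rewrite -/u; lra.
    rewrite /u; ring.
  by rewrite lerDl; apply: sumr_ge0.
rewrite -mulr_sumr in S4.
have neg : u + t - X2 < 0 by rewrite /t; lra.
move: S3 S4 S5 neg.
set SG := \sum_l G l. set SW := \sum_l (w l - x (enum_val l)) * G l.
move=> S3 S4 S5 neg.
have : (u + t - X2) * SG <= (u + t - X2) * t by nra.
nra.
Qed.

Lemma left_side (R : realFieldType) n (y x : 'I_n -> R) (T : {set 'I_n})
  (hT : consecutive T) (hx : is_proj_mono y x) (w : 'I_#|T| -> R)
  (hw : is_proj_mono (subvec y T) w) (i j : 'I_#|T|) (hij : (j : nat) = i.+1)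
  (hlt : x (enum_val i) < x (enum_val j)) : w i <= x (enum_val i).
Proof.
rewrite leNgt; apply/negP => hwi.
have mx := hx.1. have mw := hw.1.
have Ti := enum_valP i.
have ij : (i < j)%N by rewrite hij.
have wi : w i <= w j by apply: mw; exact: ltnW.
set X1 := x (enum_val i) in hlt hwi *. set X2 := x (enum_val j) in hlt *.
set u := w i in hwi wi *.
set t := (u - X1) / 2.
have t0 : 0 < t by rewrite /t; lra.
set rk := enum_rank_in Ti.
have rkK : forall k, k \in T -> enum_val (rk k) = k := enum_rankK_in Ti.
pose G := fun l : 'I_#|T| => if (l <= i)%N && (u - t < w l) then w l - (u - t) else 0.
pose g := fun k : 'I_n => if k \in T then G (rk k) else 0.
have G0 : forall l, 0 <= G l by move=> l; rewrite /G; case: ifP => [/andP[_ h]|_]; lra.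
have g0 : forall k, 0 <= g k by move=> k; rewrite /g; case: ifP.
pose eps := (X2 - X1) / t.
have eps0 : 0 < eps by rewrite divr_gt0 // subr_gt0.
have epst : eps * t = X2 - X1 by rewrite /eps divfK // gt_eqF.
have mz1 : monotone (fun l => w l - G l).
  move=> l1 l2 l12; have wl := mw l1 l2 l12; rewrite /G.
  case: ifP => [/andP[il1 h1]|/negbT h1]; case: ifP => [/andP[il2 h2]|/negbT h2].
  - lra.
  - lra.
  - rewrite (leq_trans l12 il2) /= -leNgt in h1; lra.
  - lra.
have mz2 : monotone (fun k => x k + eps * g k).
  move=> k1 k2 k12; have xl := mx k1 k2 k12.
  have eg2 : 0 <= eps * g k2 by apply: mulr_ge0; [lra|].
  case: (boolP (g k1 == 0)) => [/eqP ->|gk1].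
    rewrite mulr0 addr0; lra.
  have [T1 i1 w1 e1] : [/\ k1 \in T, (rk k1 <= i)%N, u - t < w (rk k1) & g k1 = w (rk k1) - (u - t)].
    move: gk1; rewrite /g; case: ifP => [T1|]; last by rewrite eqxx.
    rewrite /G; case: ifP => [/andP[a b] _|]; last by rewrite eqxx.
    by split.
  have wu : w (rk k1) <= u by apply: mw.
  have X1le : x k1 <= X1 by rewrite -(rkK k1 T1); apply: mx; apply: ev_le.
  case: (leqP (enum_val j) k2) => jk2.
    have hk2 : X2 <= x k2 := mx _ _ jk2.
    have : eps * g k1 <= eps * t by rewrite ler_pM2l //; lra.
    lra.
  have T2 : k2 \in T by apply: (hT k1 (enum_val j)) => //; [exact: enum_valP|exact: ltnW].
  have i2 : (rk k2 <= i)%N.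
    have : (rk k2 < j)%N by apply: ev_lt_inv; rewrite rkK.
    by rewrite hij ltnS.
  have r12 : (rk k1 <= rk k2)%N by apply: ev_le_inv; rewrite !rkK.
  have w12 := mw _ _ r12.
  have e2 : g k2 = w (rk k2) - (u - t).
    rewrite /g T2 /G i2 /=; have -> : u - t < w (rk k2) by lra.
    by [].
  rewrite e1 e2.
  have : eps * (w (rk k1) - (u - t)) <= eps * (w (rk k2) - (u - t)) by rewrite ler_pM2l //; lra.
  lra.
have h1 := vi hw mz1.
have h2 := vi hx mz2.
have S1 : 0 <= \sum_l (subvec y T l - w l) * G l.
  have E : \sum_l (subvec y T l - w l) * (w l - G l - w l) = - \sum_l (subvec y T l - w l) * G l.
    by rewrite -sumrN; apply: eq_bigr => l _; ring.
  rewrite E in h1; lra.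
have S2 : \sum_l (subvec y T l - x (enum_val l)) * G l <= 0.
  have E : \sum_k (y k - x k) * (x k + eps * g k - x k) = eps * \sum_k (y k - x k) * g k.
    rewrite mulr_sumr; apply: eq_bigr => k _; ring.
  rewrite E /g (reindex_T Ti) in h2.
  rewrite /subvec; nra.
have S3 : 0 <= \sum_l (x (enum_val l) - w l) * G l.
  have -> : \sum_l (x (enum_val l) - w l) * G l =
     \sum_l (subvec y T l - w l) * G l - \sum_l (subvec y T l - x (enum_val l)) * G l.
    by rewrite -sumrB; apply: eq_bigr => l _; ring.
  lra.
have S4 : \sum_l (x (enum_val l) - w l) * G l <= \sum_l (X1 - (u - t)) * G l.
  apply: ler_sum => l _; rewrite /G; case: ifP => [/andP[il h]|_]; last by rewrite !mulr0.
  have : x (enum_val l) <= X1 by apply: mx; apply: ev_le.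
  have pos : 0 <= w l - (u - t) by lra.
  move=> hh; apply: ler_wpM2r => //; lra.
have S5 : t <= \sum_l G l.
  rewrite (bigD1 i) //=.
  have -> : G i = t.
    rewrite /G leqnn /=; have -> : u - t < w i by rewrite -/u; lra.
    rewrite /u; ring.
  by rewrite lerDl; apply: sumr_ge0.
rewrite -mulr_sumr in S4.
have neg : X1 - (u - t) < 0 by rewrite /t; lra.
move: S3 S4 S5 neg.
set SG := \sum_l G l. set SW := \sum_l (x (enum_val l) - w l) * G l.
move=> S3 S4 S5 neg.
have : (X1 - (u - t)) * SG <= (X1 - (u - t)) * t by nra.
nra.
Qed.

Lemma adj (R : realFieldType) n (y x : 'I_n -> R) (T : {set 'I_n})
  (hT : consecutive T) (hx : is_proj_mono y x) (w : 'I_#|T| -> R)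
  (hw : is_proj_mono (subvec y T) w) (i j : 'I_#|T|) (hij : (j : nat) = i.+1)
  (heq : w i = w j) : x (enum_val i) = x (enum_val j).
Proof.
have le : x (enum_val i) <= x (enum_val j) by apply: hx.1; apply: ev_le; rewrite hij.
rewrite le_eqVlt in le; case/orP: le => [/eqP //|lt].
have := right_side hT hx hw hij lt; have := left_side hT hx hw hij lt; lra.
Qed.

Lemma chain (R : realFieldType) n (y x : 'I_n -> R) (T : {set 'I_n})
  (hT : consecutive T) (hx : is_proj_mono y x) (w : 'I_#|T| -> R)
  (hw : is_proj_mono (subvec y T) w) d : forall (l1 l2 : 'I_#|T|),
  (l2 : nat) = (l1 + d)%N -> w l1 = w l2 -> x (enum_val l1) = x (enum_val l2).
Proof.
elim: d => [|d IH] l1 l2 e heq.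
  by have -> : l1 = l2 by apply: val_inj; rewrite /= e addn0.
have lt : (l1.+1 < #|T|)%N.
  by rewrite (leq_ltn_trans _ (ltn_ord l2)) // e addnS ltnS leq_addr.
pose l' := Ordinal lt.
have a : w l1 <= w l' by apply: hw.1; exact: leqnSn.
have b : w l' <= w l2 by apply: hw.1; rewrite /= e addnS ltnS leq_addr.
have w1 : w l1 = w l' by apply/eqP; rewrite eq_le a /= heq b.
rewrite (adj hT hx hw (i:=l1) (j:=l')) //.
apply: IH; first by rewrite e /= addSnnS.
by rewrite -w1.
Qed.

Lemma xfac (R : realFieldType) n (y x : 'I_n -> R) (T : {set 'I_n})
  (hT : consecutive T) (hx : is_proj_mono y x) (w : 'I_#|T| -> R)
  (hw : is_proj_mono (subvec y T) w) (l1 l2 : 'I_#|T|) :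
  w l1 = w l2 -> x (enum_val l1) = x (enum_val l2).
Proof.
case: (leqP l1 l2) => h heq.
  by apply: (chain hT hx hw (d := (l2 - l1)%N)) => //; rewrite subnKC.
symmetry; apply: (chain hT hx hw (d := (l1 - l2)%N)).
  by rewrite subnKC // ltnW.
by rewrite heq.
Qed.

Lemma undup_map_le (I S : eqType) (g h : I -> S) (l : seq I) :
  (forall a b, h a = h b -> g a = g b) ->
  (size (undup (map g l)) <= size (undup (map h l)))%N.
Proof.
move=> H; elim: l => //= a l IH.
case: ifP => ga; case: ifP => ha /=.
- exact: IH.
- exact: leqW.
- by move/mapP: ha => [b bl hb]; rewrite (H _ _ hb) map_f in ga.
- by rewrite ltnS.
Qed.

Lemma kdist_block (R : realFieldType) n (y x : 'I_n -> R) (T : {set 'I_n})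
  (hT : consecutive T) (hx : is_proj_mono y x) (w : 'I_#|T| -> R)
  (hw : is_proj_mono (subvec y T) w) : (kdist (subvec x T) <= kdist w)%N.
Proof.
rewrite /kdist !codomE; apply: undup_map_le => a b; exact: (xfac hT hx hw).
Qed.

Lemma union_bound (R : realFieldType) n (x : 'I_n -> R) (P : {set {set 'I_n}})
  (hP : partition P [set: 'I_n]) :
  (kdist x <= \sum_(T in P) kdist (subvec x T))%N.
Proof.
rewrite /kdist.
set s := flatten [seq undup (codom (subvec x T)) | T in P].
have sub : {subset undup (codom x) <= s}.
  move=> v; rewrite mem_undup => /codomP [k ->].
  have kc : k \in cover P by rewrite (cover_partition hP) inE.
  have Pk := pblock_mem kc.
  have kin : k \in pblock P k by rewrite mem_pblock.
  apply/flatten_imageP; exists (pblock P k) => //.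
  rewrite mem_undup; apply/codomP; exists (enum_rank_in kin k).
  by rewrite /subvec enum_rankK_in.
apply: leq_trans (uniq_leq_size (undup_uniq _) sub) _.
rewrite /s size_flatten /shape -map_comp sumnE big_map.
by rewrite big_enum.
Qed.

Theorem mainTheorem5 (R : realFieldType) (n : nat) (hn : (0 < n)%N)
  (y : 'I_n -> R) (P : {set {set 'I_n}})
  (hP : partition P [set: 'I_n])
  (hcons : forall T, T \in P -> consecutive T)
  (x : 'I_n -> R) (hx : is_proj_mono y x)
  (xs : forall T : {set 'I_n}, 'I_#|T| -> R)
  (hxs : forall T, T \in P -> is_proj_mono (subvec y T) (xs T)) :
  (kdist x <= \sum_(T in P) kdist (xs T))%N.
Proof.
apply: leq_trans (union_bound x hP) _.
apply: leq_sum => T TP.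
exact: (kdist_block (hcons T TP) hx (hxs T TP)).
Qed.
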